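(* For all $r\ge0$, $2\le n\le\infty$ and $0\le k\le r$, every morphism of $n$-multicomplexes having the left lifting property with respect to all morphisms that have the right lifting property with respect to $J^n_k$ is an $E_r$-quasi-isomorphism; i.e. $J^n_k\text{-cof}\subseteq\mathcal E^n_r$.
   Context: Throughout, $R$ is a commutative unital ring. For $1\le n\le\infty$, an $n$-multicomplex is a $\mathbb Z\times\mathbb Z$-bigraded $R$-module $A=\{A^{p,q}\}$ with $R$-linear maps $d_i\colon A\to A$ ($i\ge0$) of bidegree $(-i,1-i)$ such that $\sum_{i+j=l}(-1)^id_id_j=0$ for all $l\ge0$, and $d_i=0$ for all $i\ge n$. Morphisms are bidegree $(0,0)$ maps commuting with all $d_i$; category $\mathrm{Ch}_n$. Spectral sequence: $Z_0^{p,q}(A)=A^{p,q}$; for $r\ge1$, $Z_r^{p,q}(A)$ is the set of $a_0\in A^{p,q}$ for which there exist $a_j\in A^{p-j,q-j}$ ($1\le j\le r-1$) with $\sum_{i+j=l}(-1)^id_ia_j=0$ for $0\le l\le r-1$. $B_0=0$, $B_1^{p,q}(A)=A^{p,q}\cap\operatorname{im}d_0$, and for $r\ge2$, $B_r^{p,q}(A)$ is the set of $x\in A^{p,q}$ for which there exist $b_i\in A^{p+r-1-i,q+r-2-i}$ ($0\le i\le r-1$) with $x=\sum_{i=0}^{r-1}(-1)^id_ib_{r-1-i}$ and $\sum_{i=0}^l(-1)^id_ib_{l-i}=0$ for $0\le l\le r-2$. $E_r^{p,q}(A)=Z_r^{p,q}(A)/B_r^{p,q}(A)$, the spectral sequence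 of the column-filtered total complex. A morphism $f$ is an $E_r$-quasi-isomorphism if $E_{r+1}(f)$ is an isomorphism; $\mathcal E^n_r$ denotes the class of these. Representing objects: $\mathbb D^n(p,q)$ is the free $n$-multicomplex on one generator in bidegree $(p,q)$. $\mathcal ZW^n_0(p,q)=\mathbb D^n(p,q)$; for $k\ge1$, $\mathcal ZW^n_k(p,q)$ is the $n$-multicomplex generated by elements $a_0,\dots,a_{k-1}$, $a_i$ in bidegree $(p-i,q-i)$, subject to the relations $\sum_{i+j=l}(-1)^id_ia_j=0$ for $0\le l\le k-1$ (equivalently the iterated pushout construction of the paper); morphisms $\mathcal ZW^n_k(p,q)\to A$ correspond to tuples $(a_0,\dots,a_{k-1})$ in $A$ satisfying these relations. $J^n_k=\{0\to\mathcal ZW^n_k(p,q)\}_{p,q\in\mathbb Z}$. For a set $S$ of maps, $S$-inj is the class of maps with the right lifting property w.r.t. $S$, and $S$-cof is the class of maps with the left lifting property w.r.t. $S$-inj. *)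

(* Defs.v *)
From HB Require Import structures.
From mathcomp Require Import all_boot all_order all_algebra.
Set Implicit Arguments. Unset Strict Implicit. Unset Printing Implicit Defensive.
Import GRing.Theory Num.Theory.
Local Open Scope ring_scope.

(* n in {1,2,...} ∪ {∞}: [Some m] is m, [None] is ∞.  [ltx i n] is  i < n. *)
Definition ltx (i : nat) (n : option nat) : bool :=
  if n is Some m then (i < m)%N else true.

(* index shift with [sh p 0] convertible to [p]: sh p j = p - j *)
Definition sh (p : int) (j : nat) : int :=
  if j is 0%N then p else p - j%:Z.

(* The map d_i of bidegree (-i,1-i) is encoded as the family of linear maps
   [mx_d i p q p' q' : A^{p,q} -> A^{p',q'}] which is required to vanish unless
   (p',q') = (p-i, q+1-i); this avoids casts between equal indices. *)
Record mcx (R : comPzRingType) (n : option nat) := Mcx {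
  mA :> int -> int -> lmodType R;
  md : nat -> forall p q p' q' : int, {linear mA p q -> mA p' q'};
  md_deg : forall i p q p' q' (x : mA p q),
      (p' != p - i%:Z) || (q' != q + 1 - i%:Z) -> md i p q p' q' x = 0;
  md_vanish : forall i p q p' q' (x : mA p q), ~~ ltx i n -> md i p q p' q' x = 0;
  md_rel : forall (l : nat) p q (x : mA p q),
      \sum_(i < l.+1)
        (-1) ^+ i *: md i (p - (l - i)%:Z) (q + 1 - (l - i)%:Z) (p - l%:Z) (q + 2 - l%:Z)
                       (md (l - i) p q (p - (l - i)%:Z) (q + 1 - (l - i)%:Z) x) = 0
}.

Record mhom (R : comPzRingType) (n : option nat) (A B : mcx R n) := Mhom {
  mf :> forall p q, {linear A p q -> B p q};
  mf_comm : forall i p q p' q' (x : A p q),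
      mf p' q' (md A i p q p' q' x) = md B i p q p' q' (mf p q x)
}.

Section Defs.
Variables (R : comPzRingType) (n : option nat).

Definition zw_rel (A : mcx R n) (k : nat) (p q : int)
    (a : forall j : nat, A (sh p j) (sh q j)) : Prop :=
  forall l : nat, (l < k)%N ->
    \sum_(i < l.+1)
      (-1) ^+ i *: md A i (sh p (l - i)) (sh q (l - i)) (sh p l) (sh q l + 1) (a (l - i)%N)
    = 0.

Definition Zr (A : mcx R n) (r : nat) (p q : int) (x : A p q) : Prop :=
  exists a : forall j : nat, A (sh p j) (sh q j), a 0%N = x /\ zw_rel r a.

Definition Br (A : mcx R n) (r : nat) (p q : int) (x : A p q) : Prop :=
  match r with
  | 0%N => x = 0
  | 1%N => exists y : A p (q - 1), x = md A 0 p (q - 1) p q y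
  | r'.+2 =>
      let P := p + r%:Z - 1 in let Q := q + r%:Z - 2 in
      exists b : forall m : nat, A (sh P m) (sh Q m),
        x = \sum_(i < r) (-1) ^+ i *: md A i (sh P (r - 1 - i)) (sh Q (r - 1 - i)) p q
                                        (b (r - 1 - i)%N)
        /\ forall l : nat, (l <= r - 2)%N ->
             \sum_(i < l.+1) (-1) ^+ i *:
                md A i (sh P (l - i)) (sh Q (l - i)) (sh P l) (sh Q l + 1) (b (l - i)%N) = 0
  end.

(* f is an E_r-quasi-isomorphism: E_{r+1}(f) : Z_{r+1}/B_{r+1} -> Z_{r+1}/B_{r+1}
   is bijective in every bidegree (written out on representatives). *)
Definition Er_qiso (r : nat) (X Y : mcx R n) (f : mhom X Y) : Prop :=
  forall p q : int,
    (forall x : X p q, Zr (r.+1) x -> Br (r.+1) (f p q x) -> Br (r.+1) x) /\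
    (forall y : Y p q, Zr (r.+1) y ->
       exists x : X p q, Zr (r.+1) x /\ Br (r.+1) (f p q x - y)).

(* Morphisms ZW^n_k(p,q) -> A correspond to tuples (a_0,...,a_{k-1}) satisfying
   the relations (for k = 0: ZW_0 = D^n(p,q), a single free element a_0).
   f has the RLP w.r.t. J^n_k = {0 -> ZW^n_k(p,q)} iff every such tuple in B
   lifts along f to such a tuple in A. *)
Definition J_inj (k : nat) (A B : mcx R n) (f : mhom A B) : Prop :=
  forall (p q : int) (b : forall j : nat, B (sh p j) (sh q j)),
    zw_rel k b ->
    exists a : forall j : nat, A (sh p j) (sh q j),
      zw_rel k a /\ forall j : nat, (j < maxn k 1)%N -> f _ _ (a j) = b j.

Definition J_cof (k : nat) (X Y : mcx R n) (g : mhom X Y) : Prop :=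
  forall (A B : mcx R n) (f : mhom A B), J_inj k f ->
  forall (u : mhom X A) (v : mhom Y B),
    (forall p q (x : X p q), f p q (u p q x) = v p q (g p q x)) ->
    exists h : mhom Y A,
      (forall p q (x : X p q), h p q (g p q x) = u p q x) /\
      (forall p q (y : Y p q), f p q (h p q y) = v p q y).

End Defs.

(* Main.v *)
Require Import Defs.
From HB Require Import structures.
From mathcomp Require Import all_boot all_order all_algebra.
From mathcomp Require Import boolp zify.
Set Implicit Arguments. Unset Strict Implicit. Unset Printing Implicit Defensive.
Import GRing.Theory.
Local Open Scope ring_scope.


Section Lin.
Variables (R : pzRingType).
Section P.
Variables (U1 U2 V1 V2 : lmodType R) (f : {linear U1 -> V1}) (g : {linear U2 -> V2}).
Definition ppmap (x : U1 * U2) : V1 * V2 := (f x.1, g x.2).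
Lemma pmap_lin : linear ppmap.
Proof. by move=> a x y; rewrite /ppmap /= !linearP. Qed.
HB.instance Definition _ := GRing.isLinear.Build R (U1 * U2)%type (V1 * V2)%type *:%R ppmap pmap_lin.
End P.
Section P2.
Variables (U V : lmodType R).
Definition pfst (x : U * V) : U := x.1.
Lemma pfst_lin : linear pfst. Proof. by []. Qed.
HB.instance Definition _ := GRing.isLinear.Build R (U * V)%type U *:%R pfst pfst_lin.
Definition psnd (x : U * V) : V := x.2.
Lemma psnd_lin : linear psnd. Proof. by []. Qed.
HB.instance Definition _ := GRing.isLinear.Build R (U * V)%type V *:%R psnd psnd_lin.
Definition pinl (x : U) : U * V := (x, 0).
Lemma pinl_lin : linear pinl. Proof. move=> a x y; rewrite /pinl; apply: injective_projections => /=; [by [] | by rewrite scaler0 addr0]. Qed.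
HB.instance Definition _ := GRing.isLinear.Build R U (U * V)%type *:%R pinl pinl_lin.
Definition pid (x : U) : U := x.
Lemma pid_lin : linear pid. Proof. by []. Qed.
HB.instance Definition _ := GRing.isLinear.Build R U U *:%R pid pid_lin.
End P2.
Section P3.
Variables (U1 U2 V : lmodType R) (f : {linear U1 -> V}) (g : {linear U2 -> V}).
Definition pcop (x : U1 * U2) : V := f x.1 + g x.2.
Lemma pcop_lin : linear pcop.
Proof. by move=> a x y; rewrite /pcop /= !linearP scalerDr addrACA. Qed.
HB.instance Definition _ := GRing.isLinear.Build R (U1 * U2)%type V *:%R pcop pcop_lin.
End P3.
End Lin.

Lemma pair_sum (V1 V2 : zmodType) (I : Type) (s : seq I) (P : pred I) (F : I -> V1 * V2) :
  \sum_(i <- s | P i) F i = (\sum_(i <- s | P i) (F i).1, \sum_(i <- s | P i) (F i).2).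
Proof.
elim: s => [|x s IH]; first by rewrite !big_nil.
rewrite !big_cons IH; by case: (P x).
Qed.

Section DProd.
Variables (R : pzRingType) (I : Type) (V : I -> lmodType R).
Definition dprod := forall i, V i.
HB.instance Definition _ := gen_eqMixin dprod.
HB.instance Definition _ := gen_choiceMixin dprod.
Definition dz : dprod := fun i => 0.
Definition dopp (f : dprod) : dprod := fun i => - f i.
Definition dadd (f g : dprod) : dprod := fun i => f i + g i.
Definition dscale (a : R) (f : dprod) : dprod := fun i => a *: f i.
Lemma daddA : associative dadd.
Proof. by move=> f g h; apply: functional_extensionality_dep => i; rewrite /dadd addrA. Qed.
Lemma daddC : commutative dadd.
Proof. by move=> f g; apply: functional_extensionality_dep => i; rewrite /dadd addrC. Qed.
Lemma dadd0 : left_id dz dadd.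
Proof. by move=> f; apply: functional_extensionality_dep => i; rewrite /dadd add0r. Qed.
Lemma daddN : left_inverse dz dopp dadd.
Proof. by move=> f; apply: functional_extensionality_dep => i; rewrite /dadd addNr. Qed.
HB.instance Definition _ := GRing.isZmodule.Build dprod daddA daddC dadd0 daddN.
Lemma dscaleA a b v : dscale a (dscale b v) = dscale (a * b) v.
Proof. by apply: functional_extensionality_dep => i; rewrite /dscale scalerA. Qed.
Lemma dscale1 : left_id 1 dscale.
Proof. by move=> v; apply: functional_extensionality_dep => i; rewrite /dscale scale1r. Qed.
Lemma dscaleDr : right_distributive dscale +%R.
Proof. by move=> a u v; apply: functional_extensionality_dep => i; rewrite /dscale scalerDr. Qed.
Lemma dscaleDl v : {morph dscale^~ v: a b / a + b}.
Proof. by move=> a b; apply: functional_extensionality_dep => i; rewrite /dscale scalerDl. Qed.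
HB.instance Definition _ := GRing.Zmodule_isLmodule.Build R dprod dscaleA dscale1 dscaleDr dscaleDl.
Lemma dprod_addE (f g : dprod) i : (f + g) i = f i + g i. Proof. by []. Qed.
Lemma dprod_scaleE a (f : dprod) i : (a *: f) i = a *: f i. Proof. by []. Qed.
Lemma dprod_zeroE i : (0 : dprod) i = 0. Proof. by []. Qed.
Lemma dprod_oppE (f : dprod) i : (- f) i = - f i. Proof. by []. Qed.
End DProd.

Lemma dprod_sumE (R : pzRingType) (I : Type) (V : I -> lmodType R) (J : Type) (s : seq J) (P : pred J) (F : J -> dprod V) i :
  (\sum_(j <- s | P j) F j) i = \sum_(j <- s | P j) F j i.
Proof.
elim: s => [|x s IH]; first by rewrite !big_nil.
rewrite !big_cons; case: (P x) => //; by rewrite dprod_addE IH.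
Qed.


Section Msum.
Variables (R : comPzRingType) (n : option nat).
Variables (A B : mcx R n).
Definition ms_d i p q p' q' : {linear (A p q * B p q)%type -> (A p' q' * B p' q')%type} :=
  ppmap (md A i p q p' q') (md B i p q p' q').
Lemma ms_deg i p q p' q' (x : (A p q * B p q)%type) :
  (p' != p - i%:Z) || (q' != q + 1 - i%:Z) -> ms_d i p q p' q' x = 0.
Proof. by move=> h; rewrite /= /ppmap !md_deg. Qed.
Lemma ms_vanish i p q p' q' (x : (A p q * B p q)%type) : ~~ ltx i n -> ms_d i p q p' q' x = 0.
Proof. by move=> h; rewrite /= /ppmap !md_vanish. Qed.
Lemma ms_rel (l : nat) p q (x : (A p q * B p q)%type) :
      \sum_(i < l.+1)
        (-1) ^+ i *: ms_d i (p - (l - i)%:Z) (q + 1 - (l - i)%:Z) (p - l%:Z) (q + 2 - l%:Z)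
                       (ms_d (l - i) p q (p - (l - i)%:Z) (q + 1 - (l - i)%:Z) x) = 0.
Proof.
rewrite pair_sum /=. 
have h1 := @md_rel _ _ A l _ _ x.1. have h2 := @md_rel _ _ B l _ _ x.2.
by rewrite /ppmap /= in h1 h2 *; rewrite h1 h2.
Qed.
Definition msum : mcx R n := @Mcx R n (fun p q => (A p q * B p q)%type) ms_d ms_deg ms_vanish ms_rel.

Definition mpi1 : mhom msum A := @Mhom R n msum A (fun p q => @pfst _ (A p q) (B p q)) (fun i p q p' q' x => erefl).
Definition mpi2 : mhom msum B := @Mhom R n msum B (fun p q => @psnd _ (A p q) (B p q)) (fun i p q p' q' x => erefl).
Lemma minl_comm i p q p' q' (x : A p q) :
  @pinl _ (A p' q') (B p' q') (md A i p q p' q' x) = ms_d i p q p' q' (@pinl _ (A p q) (B p q) x).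
Proof. by rewrite /= /ppmap /pinl /= linear0. Qed.
Definition minl : mhom A msum := @Mhom R n A msum (fun p q => @pinl _ (A p q) (B p q)) minl_comm.
End Msum.

Section Mhoms.
Variables (R : comPzRingType) (n : option nat).
Definition mid (A : mcx R n) : mhom A A := @Mhom R n A A (fun p q => @pid _ (A p q)) (fun i p q p' q' x => erefl).
Variables (A B C : mcx R n) (f : mhom A C) (g : mhom B C).
Lemma mcop_comm i p q p' q' (x : msum A B p q) :
  pcop (f p' q') (g p' q') (md (msum A B) i p q p' q' x) = md C i p q p' q' (pcop (f p q) (g p q) x).
Proof. by rewrite /= /ppmap /pcop /= linearD !mf_comm. Qed.
Definition mcop : mhom (msum A B) C := @Mhom R n (msum A B) C (fun p q => pcop (f p q) (g p q)) mcop_comm.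
End Mhoms.


Section Tot.
Variables (R : comPzRingType) (n : option nat) (Y : mcx R n).
Definition Mrow (p : int) := dprod (fun q : int => Y p q).
Definition M := dprod Mrow.

Lemma Mext (F G : M) : (forall p q, F p q = G p q) -> F = G.
Proof.
move=> h; apply: functional_extensionality_dep => p.
by apply: functional_extensionality_dep => q.
Qed.

Definition Dm (i : nat) (F : M) : M := fun p q =>
  md Y i (p + i%:Z) (q - 1 + i%:Z) p q (F (p + i%:Z) (q - 1 + i%:Z)).
Lemma Dm_lin i : linear (Dm i).
Proof. by move=> a F G; apply: Mext => p q; rewrite /Dm /= !dprod_addE !dprod_scaleE linearP. Qed.
HB.instance Definition _ i := GRing.isLinear.Build R M M *:%R (Dm i) (Dm_lin i).

Lemma MsumE (J : Type) (s : seq J) (P : pred J) (F : J -> M) p q :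
  (\sum_(j <- s | P j) F j) p q = \sum_(j <- s | P j) F j p q.
Proof. by rewrite dprod_sumE dprod_sumE. Qed.

Lemma Dm_eval i (F : M) c d a b : c + i%:Z = a -> d - 1 + i%:Z = b ->
  Dm i F c d = md Y i a b c d (F a b).
Proof. by move=> <- <-. Qed.

Lemma mdmd_idx i j a b c d e f a' b' c' d' (F : M) :
  a = a' -> b = b' -> c = c' -> d = d' ->
  md Y i c d e f (md Y j a b c d (F a b)) = md Y i c' d' e f (md Y j a' b' c' d' (F a' b')).
Proof. by move=> <- <- <- <-. Qed.

Lemma md_rel' (l : nat) P Q p' q' (x : Y P Q) : p' = P - l%:Z -> q' = Q + 2 - l%:Z ->
      \sum_(i < l.+1)
        (-1) ^+ i *: md Y i (P - (l - i)%:Z) (Q + 1 - (l - i)%:Z) p' q'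
                       (md Y (l - i) P Q (P - (l - i)%:Z) (Q + 1 - (l - i)%:Z) x) = 0.
Proof. move=> -> ->; exact: md_rel. Qed.

Lemma D_rel (l : nat) (F : M) :
  \sum_(i < l.+1) (-1) ^+ i *: Dm i (Dm (l - i) F) = 0.
Proof.
apply: Mext => p q; rewrite MsumE dprod_zeroE dprod_zeroE.
rewrite -[RHS](@md_rel' l (p + l%:Z) (q - 2 + l%:Z) p q (F (p + l%:Z) (q - 2 + l%:Z))); try lia.
apply: eq_bigr => i _; rewrite dprod_scaleE dprod_scaleE; congr (_ *: _).
have hi := ltn_ord i.
rewrite /Dm; apply: mdmd_idx; lia.
Qed.

Definition ins (a b : int) (y : Y a b) : M := fun p q =>
  match a =P p with
  | ReflectT e1 => match b =P q with
                   | ReflectT e2 => eq_rect b (fun q => Y p q) (eq_rect a (fun p => Y p b) y p e1) q e2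
                   | ReflectF _ => 0 end
  | ReflectF _ => 0 end.

Lemma insE a b (y : Y a b) : ins y a b = y.
Proof.
rewrite /ins; case: (a =P a) => [e1|//]; case: (b =P b) => [e2|//].
by rewrite (eq_irrelevance e1 (erefl a)) (eq_irrelevance e2 (erefl b)).
Qed.

Lemma insN a b (y : Y a b) p q : (p != a) || (q != b) -> ins y p q = 0.
Proof.
rewrite /ins; case: (a =P p) => [e1|//]; case: (b =P q) => [e2|//].
by subst; rewrite !eqxx.
Qed.

Lemma ins_lin a b : linear (@ins a b).
Proof.
move=> c y z; apply: Mext => p q; rewrite /= !dprod_addE !dprod_scaleE /ins.
case: (a =P p) => [e1|_]; last by rewrite scaler0 addr0.
case: (b =P q) => [e2|_]; last by rewrite scaler0 addr0.
by subst.
Qed.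
HB.instance Definition _ a b := GRing.isLinear.Build R (Y a b) M *:%R (@ins a b) (@ins_lin a b).

Lemma D_ins i a b (y : Y a b) :
  Dm i (ins y) = ins (md Y i a b (a - i%:Z) (b + 1 - i%:Z) y).
Proof.
apply: Mext => p q; rewrite /Dm.
case: (eqVneq (p + i%:Z) a) => [e1|n1]; first case: (eqVneq (q - 1 + i%:Z) b) => [e2|n2].
- subst a b; rewrite insE.
  have -> : p + i%:Z - i%:Z = p by lia.
  have -> : q - 1 + i%:Z + 1 - i%:Z = q by lia.
  by rewrite insE.
- rewrite insN ?n2 ?orbT // linear0 insN //.
  apply/orP; right; apply/eqP => e; move/eqP: n2; apply; lia.
- rewrite insN ?n1 ?orTb // linear0 insN //.
  apply/orP; left; apply/eqP => e; move/eqP: n1; apply; lia.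
Qed.

Lemma ins_idx i a b c d c' d' (y : Y a b) : c = c' -> d = d' ->
  ins (md Y i a b c d y) = ins (md Y i a b c' d' y).
Proof. by move=> <- <-. Qed.

End Tot.


Lemma sgsq (R : pzRingType) (i : nat) : (-1) ^+ i * (-1) ^+ i = 1 :> R.
Proof. by rewrite -signr_odd; case: (odd i); rewrite ?expr0 ?expr1 ?mulrNN ?mulr1. Qed.

Lemma sg_sub (R : pzRingType) (L i : nat) : (i <= L)%N -> (-1) ^+ (L - i) = (-1) ^+ L * (-1) ^+ i :> R.
Proof.
move=> h; rewrite -{2}(subnK h) exprD -mulrA sgsq mulr1 //.
Qed.

Lemma sg_pred (R : pzRingType) (m : nat) : (0 < m)%N -> (-1) ^+ m.-1 = - (-1) ^+ m :> R.
Proof. by case: m => // m _; rewrite exprS /= mulN1r opprK. Qed.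

Lemma sum_pick (V : zmodType) (L j : nat) (F : nat -> V) :
  \sum_(i < L.+1) (if (i : nat) == j then F i else 0) = if (j <= L)%N then F j else 0.
Proof.
elim: L => [|L IH]; first by rewrite big_ord_recr big_ord0 /= add0r; case: j.
rewrite big_ord_recr /= IH.
case: (ltngtP j L.+1) => h; [have -> : (j<=L)%N by lia | have -> : (j<=L)%N = false by lia | subst j; have -> : (L.+1<=L)%N = false by lia ]; rewrite ?addr0 ?add0r //.
Qed.

Section Cone.
Variables (R : comPzRingType) (n : option nat) (Y : mcx R n) (r : nat).
Definition Qs := dprod (fun _ : nat => M Y).
Definition PP := (Qs * Qs)%type.
Lemma QaddE (f g : Qs) m : (f + g) m = f m + g m. Proof. by []. Qed.
Lemma QscaleE a (f : Qs) m : (a *: f) m = a *: f m. Proof. by []. Qed.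
Lemma QzeroE m : (0 : Qs) m = 0. Proof. by []. Qed.
Lemma QoppE (f : Qs) m : (- f) m = - f m. Proof. by []. Qed.
Lemma QsumE (J : Type) (s : seq J) (P : pred J) (F : J -> Qs) m :
  (\sum_(j <- s | P j) F j) m = \sum_(j <- s | P j) F j m.
Proof. exact: dprod_sumE. Qed.
Definition link0 (m : nat) : bool := if r is 0 then m == 0%N else (0 < m)%N && (m < r)%N.
Definition link1 (m : nat) : bool := (0 < m)%N && (m <= r)%N.
Definition Phi1 i (z : PP) : Qs := fun m => (-1) ^+ m *: Dm i (z.1 m).
Definition Phi2 i (z : PP) : Qs := fun m =>
  - (-1) ^+ (m + i) *: Dm i (z.2 m) + (if (i == 0)%N && link0 m then z.1 m else 0)
  + (if (i == 1)%N && link1 m then z.1 m.-1 else 0).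
Definition Phi i (z : PP) : PP := (Phi1 i z, Phi2 i z).

Lemma lin3 (V : lmodType R) (a : R) (A1 A2 B1 B2 C1 C2 : V) :
  a *: (A1 + B1 + C1) + (A2 + B2 + C2) = (a *: A1 + A2) + (a *: B1 + B2) + (a *: C1 + C2).
Proof. by rewrite !scalerDr addrACA; congr (_ + _); rewrite addrACA. Qed.

Lemma Phi_lin i : linear (Phi i).
Proof.
move=> a x y; rewrite /Phi; apply: injective_projections => /=;
  apply: functional_extensionality_dep => m.
- by rewrite /Phi1 /= !QaddE !QscaleE linearP scalerDr !scalerA mulrC.
- rewrite /Phi2 /= lin3 !QaddE !QscaleE linearP scalerDr !scalerA (mulrC a).
  by case: ((i == 0%N) && link0 m); case: ((i == 1%N) && link1 m); rewrite ?scaler0 ?addr0.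
Qed.
HB.instance Definition _ i := GRing.isLinear.Build R PP PP *:%R (Phi i) (Phi_lin i).

Lemma phi_sum1 (w : nat -> PP) L m :
  (\sum_(i < L.+1) (-1) ^+ i *: Phi i (w (L - i)%N)).1 m =
  (-1) ^+ m *: \sum_(i < L.+1) (-1) ^+ i *: Dm i ((w (L - i)%N).1 m).
Proof.
rewrite pair_sum /= QsumE scaler_sumr; apply: eq_bigr => i _.
by rewrite QscaleE /Phi1 !scalerA mulrC.
Qed.

Lemma sum_if0 (V : lmodType R) L (c : bool) (F : nat -> V) :
  \sum_(i < L.+1) (-1) ^+ i *: (if ((i : nat) == 0%N) && c then F i else 0) = if c then F 0%N else 0.
Proof.
rewrite (eq_bigr (fun i : 'I_L.+1 => if (i : nat) == 0%N then (if c then F 0%N else 0) else 0)).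
  by rewrite (@sum_pick _ L 0 (fun=> if c then F 0%N else 0)) leq0n.
move=> i _; case: eqP => [->|_] /=; last by rewrite scaler0.
by rewrite expr0 scale1r.
Qed.

Lemma sum_if1 (V : lmodType R) L (c : bool) (F : nat -> V) :
  \sum_(i < L.+1) (-1) ^+ i *: (if ((i : nat) == 1%N) && c then F i else 0) =
  if (0 < L)%N && c then - F 1%N else 0.
Proof.
rewrite (eq_bigr (fun i : 'I_L.+1 => if (i : nat) == 1%N then (if c then - F 1%N else 0) else 0)).
  by rewrite (@sum_pick _ L 1 (fun=> if c then - F 1%N else 0)); case: L => //= L; case: c.
move=> i _; case: eqP => [->|_] /=; last by rewrite scaler0.
by case: c; rewrite ?scaler0 // expr1 scaleN1r.
Qed.

Lemma phi_sum2 (w : nat -> PP) L m :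
  (\sum_(i < L.+1) (-1) ^+ i *: Phi i (w (L - i)%N)).2 m =
  - ((-1) ^+ m *: \sum_(i < L.+1) Dm i ((w (L - i)%N).2 m))
  + (if link0 m then (w L).1 m else 0)
  - (if (0 < L)%N && link1 m then (w L.-1).1 m.-1 else 0).
Proof.
rewrite pair_sum /= QsumE.
rewrite (eq_bigr (fun i : 'I_L.+1 => - ((-1) ^+ m *: Dm i ((w (L - i)%N).2 m)) +
   (-1) ^+ i *: (if ((i : nat) == 0%N) && link0 m then (w (L - i)%N).1 m else 0) +
   (-1) ^+ i *: (if ((i : nat) == 1%N) && link1 m then (w (L - i)%N).1 m.-1 else 0))); last first.
  move=> i _; rewrite QscaleE /Phi2 !scalerDr scalerA; congr (_ + _ + _).
  by rewrite exprD mulrN mulrCA sgsq mulr1 scaleNr.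
rewrite !big_split /= sumrN -scaler_sumr (sum_if0 _ _ (fun i => (w (L - i)%N).1 m)) (sum_if1 _ _ (fun i => (w (L - i)%N).1 m.-1)) subn0.
congr (_ + _ + _).
case: L => [|L] /=; first by rewrite oppr0.
by rewrite subn1 /=; case: (link1 m); rewrite ?oppr0.
Qed.
End Cone.


Section ConeMcx.
Variables (R : comPzRingType) (n : option nat) (Y : mcx R n) (r : nat).
Variable (hn : if n is Some m then (2 <= m)%N else true).

Lemma Phi_rel (l : nat) (z : PP Y) :
  \sum_(i < l.+1) (-1) ^+ i *: Phi r i (Phi r (l - i) z) = 0.
Proof.
apply: injective_projections; apply: functional_extensionality_dep => m.
- rewrite (phi_sum1 r (fun j => Phi r j z)) /=.
  rewrite (eq_bigr (fun i : 'I_l.+1 => (-1) ^+ m *: ((-1) ^+ i *: Dm i (Dm (l - i) (z.1 m))))).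
    by rewrite -scaler_sumr D_rel !scaler0.
  by move=> i _; rewrite /Phi1 linearZ /= !scalerA mulrC.
- rewrite (phi_sum2 r (fun j => Phi r j z)) /=.
  rewrite (eq_bigr (fun i : 'I_l.+1 =>
     (- (-1) ^+ (m + l)) *: ((-1) ^+ i *: Dm i (Dm (l - i) (z.2 m)))
     + (if (i : nat) == l then (if link0 r m then Dm i (z.1 m) else 0) else 0)
     + (if (i : nat) == l.-1 then (if (0 < l)%N && link1 r m then Dm i (z.1 m.-1) else 0) else 0))); last first.
    move=> i _; have hi := ltn_ord i; rewrite /Phi2 /= !linearD linearZ /=.
    congr (_ + _ + _).
    - by rewrite scalerA !exprD sg_sub // mulNr mulrA.
    - case: (eqVneq (i : nat) l) => e.
        by rewrite e subnn /=; case: (link0 r m); rewrite ?linear0.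
      by rewrite (_ : (l - i == 0)%N = false) ?linear0 //; lia.
    - case: (eqVneq (i : nat) l.-1) => e.
        have -> : (l - i == 1)%N = (0 < l)%N by lia.
        rewrite e; case: (0 < l)%N; case: (link1 r m); by rewrite ?linear0.
      by rewrite (_ : (l - i == 1)%N = false) ?andFb ?linear0 //; lia.
  rewrite !big_split /= -scaler_sumr D_rel scaler0 add0r.
  rewrite (@sum_pick _ l l (fun i => if link0 r m then Dm i (z.1 m) else 0)) leqnn.
  rewrite (@sum_pick _ l l.-1 (fun i => if (0 < l)%N && link1 r m then Dm i (z.1 m.-1) else 0)) leq_pred.
  rewrite QzeroE /Phi1.
  case: (link0 r m); case: (boolP ((0 < l)%N && link1 r m)) => [/andP [hl /andP [hm _]]|_];
    rewrite ?addr0 ?add0r ?scalerDr ?opprD ?oppr0 ?subr0.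
  - by rewrite sg_pred // scaleNr opprK addrAC addrNK addNr.
  - by rewrite addr0 addNr.
  - by rewrite sg_pred // scaleNr opprK addNr.
  - by rewrite scaler0 oppr0 addr0.

Qed.

Definition mdPf i (p q p' q' : int) (z : PP Y) : PP Y :=
  if (p' == p - i%:Z) && (q' == q + 1 - i%:Z) then Phi r i z else 0.
Lemma mdPf_lin i p q p' q' : linear (mdPf i p q p' q').
Proof.
move=> a x y; rewrite /mdPf; case: (_ && _); first by rewrite linearP.
by rewrite scaler0 addr0.
Qed.
HB.instance Definition _ i p q p' q' :=
  GRing.isLinear.Build R (PP Y) (PP Y) *:%R (mdPf i p q p' q') (mdPf_lin i p q p' q').

Lemma mdPf_deg i p q p' q' (z : PP Y) :
  (p' != p - i%:Z) || (q' != q + 1 - i%:Z) -> mdPf i p q p' q' z = 0.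
Proof. by rewrite /mdPf; case/orP => /negbTE ->; rewrite ?andbF. Qed.

Lemma Phi_vanish i (z : PP Y) : ~~ ltx i n -> Phi r i z = 0.
Proof.
move=> h.
have hD : forall F : M Y, Dm i F = 0.
  move=> F; apply: Mext => p q. exact: (@md_vanish _ _ Y i _ _ p q _ h).
have hi : (1 < i)%N by move: hn h; case: n => //= m; lia.
apply: injective_projections; apply: functional_extensionality_dep => m /=.
  by rewrite /Phi1 hD scaler0.
rewrite /Phi2 hD scaler0 add0r.
have -> : (i == 0)%N = false by lia.
have -> : (i == 1)%N = false by lia.
by rewrite /= addr0.
Qed.

Lemma mdPf_vanish i p q p' q' (z : PP Y) : ~~ ltx i n -> mdPf i p q p' q' z = 0.
Proof. by move=> h; rewrite /mdPf Phi_vanish //; case: (_ && _). Qed.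

Lemma mdPf_true i p q p' q' (z : PP Y) : p' = p - i%:Z -> q' = q + 1 - i%:Z ->
  mdPf i p q p' q' z = Phi r i z.
Proof. by move=> -> ->; rewrite /mdPf !eqxx. Qed.

Lemma mdPf_rel (l : nat) p q (z : PP Y) :
      \sum_(i < l.+1)
        (-1) ^+ i *: mdPf i (p - (l - i)%:Z) (q + 1 - (l - i)%:Z) (p - l%:Z) (q + 2 - l%:Z)
                       (mdPf (l - i) p q (p - (l - i)%:Z) (q + 1 - (l - i)%:Z) z) = 0.
Proof.
rewrite -[RHS](Phi_rel l z); apply: eq_bigr => i _; have hi := ltn_ord i.
by rewrite !mdPf_true //; lia.
Qed.

Definition Cone : mcx R n :=
  @Mcx R n (fun _ _ => PP Y) mdPf mdPf_deg mdPf_vanish mdPf_rel.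

Definition epsf (p q : int) (z : PP Y) : Y p q := z.1 0%N p q.
Lemma epsf_lin p q : linear (epsf p q).
Proof. by []. Qed.
HB.instance Definition _ p q := GRing.isLinear.Build R (PP Y) (Y p q) *:%R (epsf p q) (epsf_lin p q).

Lemma eps_comm i p q p' q' (z : Cone p q) :
  epsf p' q' (md Cone i p q p' q' z) = md Y i p q p' q' (epsf p q z).
Proof.
rewrite /= /mdPf; case: (boolP (_ && _)) => [/andP [/eqP e1 /eqP e2]|hc].
  rewrite /epsf /= /Phi1 expr0 scale1r; apply: Dm_eval; lia.
rewrite md_deg; first by rewrite /epsf.
by move: hc; rewrite negb_and.
Qed.
Definition eps : mhom Cone Y := @Mhom R n Cone Y epsf eps_comm.
End ConeMcx.


Lemma tele (V : zmodType) (H : nat -> V) N :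
  \sum_(m < N.+1) (H m - H m.-1) = H N - H 0%N.
Proof.
elim: N => [|N IH]; first by rewrite big_ord1.
by rewrite big_ord_recr /= IH addrC addrA subrK.
Qed.

Section Core.
Variables (R : comPzRingType) (n : option nat) (Y : mcx R n) (r : nat).
Variable (a : nat -> PP Y).
Hypothesis Hrel : forall L, (L <= r)%N -> \sum_(i < L.+1) (-1) ^+ i *: Phi r i (a (L - i)%N) = 0.
Hypothesis hr : (0 < r)%N.

Definition al j m : M Y := (a j).1 m.
Definition ga j m : M Y := (a j).2 m.
Definition GG L m : M Y := \sum_(i < L.+1) Dm i (ga (L - i)%N m).

Lemma relG L m : (L <= r)%N -> (0 < m)%N -> (m <= r)%N ->
  (-1) ^+ m *: GG L m = (if (m < r)%N then al L m else 0) - (if (0 < L)%N then al L.-1 m.-1 else 0).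
Proof.
move=> hL hm0 hmr.
have := f_equal (fun z : PP Y => z.2 m) (Hrel hL).
rewrite (phi_sum2 r a) /= /GG /ga /al.
have -> : link0 r m = (m < r)%N by rewrite /link0; case: r hr hm0 hmr => //= r' _; lia.
have -> : link1 r m by rewrite /link1; lia.
by rewrite andbT => /eqP; rewrite -addrA addrC subr_eq0 => /eqP <-.
Qed.

Definition bt t : M Y := \sum_(m < r.+1 | (t <= m)%N && (0 < m)%N) (-1) ^+ m *: ga (m - t)%N m.
Definition bb s : M Y := - (-1) ^+ (r - s) *: bt (r - s)%N.

Lemma core l : (l <= r)%N ->
  \sum_(i < l.+1) (-1) ^+ i *: Dm i (bb (l - i)%N) = if l == r then al 0 0 else 0.
Proof.
move=> hl; set T := (r - l)%N.
rewrite (eq_bigr (fun i : 'I_l.+1 => (- (-1) ^+ T) *: \sum_(m < r.+1)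
   (if (T + i <= m)%N && (0 < m)%N then (-1) ^+ m *: Dm i (ga (m - (T + i))%N m) else 0))); last first.
  move=> i _; have hi := ltn_ord i; rewrite /bb.
  have -> : (r - (l - i) = T + i)%N by rewrite /T; lia.
  rewrite linearZ scalerA /bt linear_sum big_mkcond /=.
  have -> : (-1) ^+ i * - (-1) ^+ (T + i) = - (-1) ^+ T :> R.
    by rewrite exprD mulrN mulrCA sgsq mulr1.
  congr (_ *: _); apply: congr_big => // m _; case: (_ && _) => //; by rewrite linearZ.
rewrite -scaler_sumr exchange_big /=.
rewrite (eq_bigr (fun m : 'I_r.+1 => if (T <= m)%N && (0 < m)%N then (-1) ^+ m *: GG (m - T)%N m else 0)); last first.
  move=> m _; have hm := ltn_ord m.
  case: (boolP ((T <= m)%N && (0 < m)%N)) => [/andP [h1 h2] | hc]; last first.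
    by apply: big1 => i _; case: (boolP (_ && _)) => // hc2; move: hc hc2; lia.
  have hK : ((m - T).+1 <= l.+1)%N by rewrite /T; lia.
  rewrite /GG scaler_sumr (big_ord_widen l.+1 (fun i => (-1) ^+ m *: Dm i (ga (m - T - i)%N m)) hK).
  rewrite [RHS]big_mkcond; apply: eq_bigr => i _ /=.
  have -> : (T + i <= m)%N && (0 < m)%N = (i < (m - T).+1)%N by lia.
  by rewrite subnDA.
pose H := fun m => if (T <= m)%N && (m < r)%N then al (m - T) m else 0.
rewrite (eq_bigr (fun m : 'I_r.+1 => H m - H m.-1)); last first.
  move=> m _; have hm := ltn_ord m; rewrite /H.
  case: (boolP ((T <= m)%N && (0 < m)%N)) => [/andP [h1 h2]|hc].
  - rewrite relG; [|rewrite /T; lia|lia|lia].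
    rewrite h1 /=.
    have -> : (T <= m.-1)%N && (m.-1 < r)%N = (0 < m - T)%N by lia.
    by have -> : (m.-1 - T = (m - T).-1)%N by lia.
  - case: (eqVneq (m : nat) 0%N) => [->|hm0]; first by rewrite subrr.
    have -> : (T <= m)%N && (m < r)%N = false by move: hc; lia.
    have -> : (T <= m.-1)%N && (m.-1 < r)%N = false by move: hc; lia.
    by rewrite subrr.
rewrite (tele H r) /H ltnn andbF sub0r.
case: (eqVneq l r) => [e|ne].
  have -> : T = 0%N by rewrite /T e subnn.
  by rewrite /= hr expr0 scaleNr scale1r opprK.
have -> : (T <= 0)%N = false by rewrite /T; lia.
by rewrite /= oppr0 scaler0.
Qed.
End Core.

Lemma shE (p : int) (j : nat) : sh p j = p - j%:Z.
Proof. by case: j => //=; rewrite subr0. Qed.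

Section ConeE.
Variables (R : comPzRingType) (n : option nat) (Y : mcx R n).

Lemma MscaleE a (F : M Y) p q : (a *: F) p q = a *: F p q. Proof. by []. Qed.

Lemma cone_E (r : nat) (a : nat -> PP Y) p q :
  (forall L, (L <= r)%N -> \sum_(i < L.+1) (-1) ^+ i *: Phi r i (a (L - i)%N) = 0) ->
  Br (r.+1) ((a 0%N).1 0%N p q).
Proof.
case: r => [|r'] Hrel.
- have h0 := f_equal (fun w : PP Y => w.2 0%N) (Hrel 0%N (leqnn 0)).
  rewrite /= (phi_sum2 0 a) /= big_ord1 expr0 scale1r subr0 in h0.
  have e : (a 0%N).1 0%N = Dm 0 ((a 0%N).2 0%N).
    by apply/eqP; rewrite -subr_eq0 addrC; apply/eqP.
  exists ((a 0%N).2 0%N p (q - 1)); rewrite e; apply: Dm_eval; lia.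
- rewrite /Br /=.
  exists (fun s => bb r'.+1 a s (sh (p + r'.+2%:Z - 1) s) (sh (q + r'.+2%:Z - 2) s)); split.
    have hc := core Hrel (ltn0Sn r') (leqnn r'.+1); rewrite eqxx in hc.
    transitivity ((\sum_(i < r'.+2) (-1) ^+ i *: Dm i (bb r'.+1 a (r'.+1 - i)%N)) p q).
      by rewrite hc.
    rewrite MsumE; apply: eq_bigr => i _; have hi := ltn_ord i; rewrite MscaleE; congr (_ *: _).
    have -> : (r'.+2 - 1 - i = r'.+1 - i)%N by lia.
    apply: Dm_eval; rewrite !shE; lia.
  move=> l hl.
  have hl' : (l <= r'.+1)%N by lia.
  have hc := core Hrel (ltn0Sn r') hl'.
  have hne : (l == r'.+1) = false by lia.
  rewrite hne in hc.
  transitivity ((\sum_(i < l.+1) (-1) ^+ i *: Dm i (bb r'.+1 a (l - i)%N))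
     (sh (p + r'.+2%:Z - 1) l) (sh (q + r'.+2%:Z - 2) l + 1)); last by rewrite hc.
  rewrite MsumE; apply: eq_bigr => i _; have hi := ltn_ord i; rewrite MscaleE; congr (_ *: _).
  symmetry; apply: Dm_eval; rewrite !shE; lia.
Qed.
End ConeE.


Section Morph.
Variables (R : comPzRingType) (n : option nat).

Lemma mhom_Zr (A B : mcx R n) (f : mhom A B) r p q (x : A p q) : Zr r x -> Zr r (f p q x).
Proof.
case=> a [a0 hz]; exists (fun j => f _ _ (a j)); split; first by rewrite a0.
move=> l hl; have := congr1 (f (sh p l) (sh q l + 1)) (hz l hl).
rewrite linear0 linear_sum => e; rewrite -[RHS]e; apply: eq_bigr => i _; by rewrite linearZ mf_comm.
Qed.

Lemma mhom_Br (A B : mcx R n) (f : mhom A B) r p q (x : A p q) : Br r x -> Br r (f p q x).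
Proof.
case: r => [|[|r']] /=.
- by move=> ->; rewrite linear0.
- by case=> y ->; exists (f _ _ y); rewrite mf_comm.
- case=> b [hx hb]; exists (fun m => f _ _ (b m)); split.
    by rewrite hx linear_sum; apply: eq_bigr => i _; rewrite linearZ mf_comm.
  move=> l hl; have := congr1 (f _ _) (hb l hl).
  rewrite linear0 linear_sum => e; rewrite -[RHS]e; apply: eq_bigr => i _; by rewrite linearZ mf_comm.
Qed.

Lemma Br_opp (A : mcx R n) r p q (x : A p q) : Br r x -> Br r (- x).
Proof.
case: r => [|[|r']] /=.
- by move=> ->; rewrite oppr0.
- by case=> y ->; exists (- y); rewrite linearN.
- case=> b [hx hb]; exists (fun m => - b m); split.
    by rewrite hx -sumrN; apply: eq_bigr => i _; rewrite linearN scalerN.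
  move=> l hl; have := congr1 (fun v => - v) (hb l hl).
  rewrite oppr0 -sumrN => e; rewrite -[RHS]e; apply: eq_bigr => i _; by rewrite linearN scalerN.
Qed.
End Morph.

Section Jinj.
Variables (R : comPzRingType) (n : option nat) (X Y : mcx R n) (g : mhom X Y) (r k : nat).
Variable (hn : if n is Some m then (2 <= m)%N else true).
Hypothesis hk : (k <= r)%N.

Lemma Jinj_cop : J_inj k (mcop g (eps Y r hn)).
Proof.
move=> p q b hb.
pose zb (j : nat) : PP Y :=
  ((fun m => if (m <= j)%N then ins (b (j - m)%N) else 0) : Qs Y, 0).
exists (fun j => ((0 : X (sh p j) (sh q j)), zb j)); split; last first.
  move=> j _; rewrite /= /pcop linear0 add0r /epsf /=.
  have insb : forall j', j' = j -> ins (b j') (sh p j) (sh q j) = b j by move=> j' ->; exact: insE.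
  exact: insb (subn0 j).
move=> l hl.
rewrite pair_sum; apply: injective_projections => /=.
  by apply: big1 => i _; rewrite linear0 scaler0.
have hr : (0 < r)%N by lia.
rewrite (eq_bigr (fun i : 'I_l.+1 => (-1) ^+ i *: Phi r i (zb (l - i)%N))); last first.
  move=> i _; have hi := ltn_ord i; rewrite /= mdPf_true //; rewrite !shE; lia.
apply: injective_projections; apply: functional_extensionality_dep => m.
- rewrite (phi_sum1 r zb).
  case: (leqP m l) => hml; last first.
    rewrite big1 ?scaler0 //; move=> i _; rewrite /zb /= (_ : (m <= l - i)%N = false) ?linear0 ?scaler0 //; lia.
  set K := (l - m)%N; have hK : (K.+1 <= l.+1)%N by lia.
  rewrite (eq_bigr (fun i : 'I_l.+1 => if (i < K.+1)%N then (-1) ^+ i *: Dm i (ins (b (K - i)%N)) else 0)); last first.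
    move=> i _; have hi0 := ltn_ord i; rewrite /zb /=.
    have -> : (m <= l - i)%N = (i < K.+1)%N by rewrite /K; lia.
    case: ifP => hi; last by rewrite linear0 scaler0.
    by have -> : (l - i - m = K - i)%N by rewrite /K; lia.
  rewrite -big_mkcond -(big_ord_widen l.+1 (fun i => (-1) ^+ i *: Dm i (ins (b (K - i)%N))) hK).
  rewrite (eq_bigr (fun i : 'I_K.+1 => ins ((-1) ^+ i *: md Y i (sh p (K - i)) (sh q (K - i)) (sh p K) (sh q K + 1) (b (K - i)%N)))); last first.
    move=> i _; have hi := ltn_ord i; rewrite D_ins linearZ /=.
    congr (_ *: _); apply: ins_idx; rewrite !shE; lia.
  rewrite -linear_sum hb ?linear0 ?scaler0 //; rewrite /K; lia.
- rewrite (phi_sum2 r zb).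
  rewrite big1; last by move=> i _; exact: linear0.
  rewrite scaler0 oppr0 add0r.
  case: (posnP m) => [->|hm].
    have -> : link0 r 0 = false by rewrite /link0; case: (r) hr.
    by rewrite /link1 /= andbF subr0.
  have -> : link0 r m = (m < r)%N by rewrite /link0; case: (r) hr hm => //= r' _; lia.
  have -> : link1 r m = (m <= r)%N by rewrite /link1; lia.
  rewrite /zb /=.
  case: (leqP m l) => hml.
    have -> : (m < r)%N by lia.
    have -> : (0 < l)%N by lia.
    have -> : (m <= r)%N by lia.
    have -> : (m.-1 <= l.-1)%N by lia.
    have -> : (l.-1 - m.-1 = l - m)%N by lia.
    by rewrite /= subrr.
  case: (posnP l) => [->|hl0] /=; first by case: (m < r)%N; rewrite subrr.
  have -> : (m.-1 <= l.-1)%N = false by lia.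
  by case: (m < r)%N; case: (m <= r)%N; rewrite /= subrr.
Qed.
End Jinj.


Lemma Cone_E (R : comPzRingType) (n : option nat) (Y : mcx R n) (r : nat)
  (hn : if n is Some m then (2 <= m)%N else true) p q (z : Cone Y r hn p q) :
  Zr (r.+1) z -> Br (r.+1) (eps Y r hn p q z).
Proof.
case=> a [a0 ha].
have -> : eps Y r hn p q z = (a 0%N).1 0%N p q by rewrite a0.
apply: cone_E => L hL.
have e := ha L hL.
rewrite -[RHS]e; apply: eq_bigr => i _; have hi := ltn_ord i.
by rewrite /= mdPf_true //; rewrite !shE; lia.
Qed.

Theorem mainTheorem8 (R : comPzRingType) (n : option nat) (r k : nat) :
  (if n is Some m then (2 <= m)%N else true) -> (k <= r)%N ->
  forall (X Y : mcx R n) (g : mhom X Y), J_cof k g -> Er_qiso r g.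
Proof.
move=> hn hk X Y g hcof.
have hcomm : forall p q (x : X p q),
    mcop g (eps Y r hn) p q (minl X (Cone Y r hn) p q x) = mid Y p q (g p q x).
  by move=> p q x; rewrite /= /pcop /pinl /=; exact: addr0.
have [h [hg hf]] := hcof _ _ _ (Jinj_cop g hn hk) _ _ hcomm.
move=> p q; split.
- move=> x _ hbx.
  have := mhom_Br (mpi1 X (Cone Y r hn)) (mhom_Br h hbx).
  by rewrite hg.
- move=> y hzy.
  exists (mpi1 X (Cone Y r hn) p q (h p q y)); split.
    exact: mhom_Zr (mhom_Zr h hzy).
  have hz2 := mhom_Zr (mpi2 X (Cone Y r hn)) (mhom_Zr h hzy).
  have hb := Br_opp (Cone_E hz2).
  have e := hf p q y.
  set w := h p q y in e hb *.
  have e' : g p q w.1 + eps Y r hn p q w.2 = y by exact: e.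
  have -> : g p q (mpi1 X (Cone Y r hn) p q w) - y = - eps Y r hn p q (mpi2 X (Cone Y r hn) p q w).
    by rewrite -e' opprD addrA subrr add0r.
  exact: hb.
Qed.
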